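(* Let $X$ be a real Hilbert space and $A,B$ nonempty closed convex subsets of $X$, and let $v$ be the displacement vector of $(A,B)$. Suppose there exist $e\in A\cap(B-v)$ and a continuous linear functional $x^*\in X^*$ with $\|x^*\|=1$ such that $$\inf x^*(B-v)=x^*(e)=\sup x^*(A)$$ and such that $x^*$ strongly exposes $A$ at $e$. Then the couple $(A,B)$ is stable.
   Context: $P_C$ is the metric projection onto a closed convex nonempty set $C$; $B_X$ the closed unit ball; $\mathrm{dist}(x,S)=\inf_{s\in S}\|x-s\|$, $\mathrm{dist}(S,T)=\inf_{s\in S}\mathrm{dist}(s,T)$. $v=P_{\overline{B-A}}(0)$. $E=\{a\in A:\mathrm{dist}(a,B)=\mathrm{dist}(A,B)\}$, $F=\{b\in B:\mathrm{dist}(b,A)=\mathrm{dist}(A,B)\}$. A functional $f\in X^*\setminus\{0\}$ strongly exposes $A$ at $a\in A$ if $f(a)=\sup f(A)$ and every sequence $\{x_n\}\subset A$ with $f(x_n)\to\sup f(A)$ converges in norm to $a$. Attouch–Wets convergence: for nonempty closed $C,D$ and $N\in\mathbb N$ let $e_N(C,D)=\sup_{c\in C\cap NB_X}\mathrm{dist}(c,D)$ ($0$ if $C\cap NB_X=\emptyset$), $h_N(C,D)=\max\{e_N(C,D),e_N(D,C)\}$; $C_j\to C$ if $h_N(C_j,C)\to0$ for every $N$. Given sequences $\{A_n\},\{B_n\}$ of closed convex nonempty sets and $a_0\in X$, the perturbed alternating projections sequences are $b_n=P_{B_n}(a_{n-1})$, $a_n=P_{A_n}(b_n)$ ($n\in\mathbb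 N$). The couple $(A,B)$ (with $E,F$ nonempty) is stable if for every choice of sequences $\{A_n\},\{B_n\}$ of closed convex nonempty sets converging in the Attouch–Wets sense to $A$ and $B$ respectively, and every $a_0\in X$, the corresponding perturbed alternating projections sequences $\{a_n\}$ and $\{b_n\}$ converge in norm. *)

(* Defs.v *)
From HB Require Import structures.
From mathcomp Require Import all_boot all_order all_algebra.
From mathcomp Require Import all_classical all_reals all_analysis.
Set Implicit Arguments. Unset Strict Implicit. Unset Printing Implicit Defensive.
Import Order.TTheory GRing.Theory Num.Theory.
Import numFieldNormedType.Exports.
Local Open Scope classical_set_scope.
Local Open Scope ring_scope.

Section Defs.
Context {R : realType} {X : normedModType R}.

Definition is_inner_product (ip : X -> X -> R) : Prop :=
  [/\ forall x y, ip x y = ip y x,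
      forall (a : R) x y z, ip (a *: x + y) z = a * ip x z + ip y z
    & forall x, `|x| ^+ 2 = ip x x].

Definition norm_from_inner_product : Prop := exists ip, is_inner_product ip.

Definition closed_convex_nonempty (C : set X) : Prop :=
  [/\ closed C, convex_set (C : set (convex_lmodType X)) & C !=set0].

Definition is_proj (C : set X) (x p : X) : Prop :=
  C p /\ forall c, C c -> `|x - p| <= `|x - c|.

Definition setdiff (B A : set X) : set X := [set b - a | b in B & a in A].

Definition displacement (A B : set X) (v : X) : Prop :=
  is_proj (closure (setdiff B A)) 0 v.

Definition dist (x : X) (S : set X) : R := inf [set `|x - s| | s in S].
Definition dist_sets (S T : set X) : R := inf [set dist s T | s in S].

Definition Eset (A B : set X) : set X := [set a | A a /\ dist a B = dist_sets A B].
Definition Fset (A B : set X) : set X := [set b | B b /\ dist b A = dist_sets A B].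

(* e_N(C,D); sup of the empty set is 0 by definition of [sup] *)
Definition excess (N : nat) (C D : set X) : R :=
  sup [set dist c D | c in C `&` [set x | `|x| <= N%:R]].
Definition hN (N : nat) (C D : set X) : R := Num.max (excess N C D) (excess N D C).

Definition AW_cvg (Cs : nat -> set X) (C : set X) : Prop :=
  forall N : nat, (fun j => hN N (Cs j) C) @ \oo --> (0 : R).

Definition perturbed_AP (As Bs : nat -> set X) (a0 : X) (a b : nat -> X) : Prop :=
  a 0%N = a0 /\ forall n : nat, is_proj (Bs n.+1) (a n) (b n.+1)
                            /\ is_proj (As n.+1) (b n.+1) (a n.+1).

Definition stable (A B : set X) : Prop :=
  Eset A B !=set0 /\ Fset A B !=set0 /\
  forall (As Bs : nat -> set X),
    (forall n, closed_convex_nonempty (As n)) ->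
    (forall n, closed_convex_nonempty (Bs n)) ->
    AW_cvg As A -> AW_cvg Bs B ->
    forall (a0 : X) (a b : nat -> X), perturbed_AP As Bs a0 a b ->
      cvg (a @ \oo) /\ cvg (b @ \oo).

Definition linear_functional (f : X -> R) : Prop :=
  forall (c : R) x y, f (c *: x + y) = c * f x + f y.

Definition dual_norm (f : X -> R) : R := sup [set `|f x| | x in [set x | `|x| <= 1]].

Definition strongly_exposes (f : X -> R) (A : set X) (a : X) : Prop :=
  [/\ (exists x, f x != 0), A a,
      ereal_sup [set (f x)%:E | x in A] = (f a)%:E
    & forall u : nat -> X, (forall n, A (u n)) ->
        (fun n => f (u n)) @ \oo --> f a -> u @ \oo --> a].

End Defs.

(* Main.v *)
Require Import Defs.
From HB Require Import structures.
From mathcomp Require Import all_boot all_order all_algebra.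
From mathcomp Require Import all_classical all_reals all_analysis.
From mathcomp Require Import ring lra.
Import Order.TTheory GRing.Theory Num.Theory.
Import numFieldNormedType.Exports.
Local Open Scope classical_set_scope.
Local Open Scope ring_scope.

Section IP.
Context {R : realType} {X : normedModType R} {ip : X -> X -> R}.
Hypothesis hip : is_inner_product ip.

Lemma ipC x y : ip x y = ip y x.
Proof. by case: hip. Qed.
Lemma ipL a x y z : ip (a *: x + y) z = a * ip x z + ip y z.
Proof. by case: hip. Qed.
Lemma nsq x : `|x| ^+ 2 = ip x x.
Proof. by case: hip. Qed.
Lemma ip0l z : ip 0 z = 0.
Proof. have := ipL 1 0 0 z; rewrite scale1r addr0 mul1r => h; lra. Qed.
Lemma ipDl x y z : ip (x + y) z = ip x z + ip y z.
Proof. by rewrite -[x]scale1r ipL mul1r scale1r. Qed.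
Lemma ipZl a x z : ip (a *: x) z = a * ip x z.
Proof. by rewrite -[a *: x]addr0 ipL ip0l addr0. Qed.
Lemma ipNl x z : ip (- x) z = - ip x z.
Proof. by rewrite -scaleN1r ipZl mulN1r. Qed.
Lemma ipBl x y z : ip (x - y) z = ip x z - ip y z.
Proof. by rewrite ipDl ipNl. Qed.
Lemma ipDr x y z : ip z (x + y) = ip z x + ip z y.
Proof. by rewrite ipC ipDl !(ipC _ z). Qed.
Lemma ipNr x z : ip z (- x) = - ip z x.
Proof. by rewrite ipC ipNl ipC. Qed.
Lemma ipBr x y z : ip z (x - y) = ip z x - ip z y.
Proof. by rewrite ipDr ipNr. Qed.
Lemma ipZr a x z : ip z (a *: x) = a * ip z x.
Proof. by rewrite ipC ipZl ipC. Qed.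

Lemma nsqB x y : `|x - y| ^+ 2 = `|x| ^+ 2 - 2 * ip x y + `|y| ^+ 2.
Proof. rewrite !nsq ipBl !ipBr (ipC y x). ring. Qed.
Lemma nsqD x y : `|x + y| ^+ 2 = `|x| ^+ 2 + 2 * ip x y + `|y| ^+ 2.
Proof. rewrite !nsq ipDl !ipDr (ipC y x). ring. Qed.

Lemma CS x y : ip x y <= `|x| * `|y|.
Proof.
have h := ler_normD x y.
have h2 : `|x + y| ^+ 2 <= (`|x| + `|y|) ^+ 2.
  by rewrite lerXn2r // ?nnegrE // addr_ge0.
rewrite nsqD in h2.
have : 2 * ip x y <= 2 * (`|x| * `|y|) by move: h2; rewrite sqrrD; lra.
by rewrite ler_pM2l.
Qed.

End IP.

Lemma near_oo_ex (P : nat -> Prop) :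
  (\forall n \near \oo, P n) -> exists N, forall n, (N <= n)%N -> P n.
Proof. by move=> [N _ HN]; exists N => n hn; apply: HN. Qed.

Section Fun.
Context {R : realType} {X : normedModType R} (f : X -> R).
Hypothesis hf : linear_functional f.

Lemma f0 : f 0 = 0.
Proof. have := hf 1 0 0; rewrite scale1r addr0 mul1r => h; lra. Qed.
Lemma fD x y : f (x + y) = f x + f y.
Proof. by rewrite -[x]scale1r hf mul1r scale1r. Qed.
Lemma fZ a x : f (a *: x) = a * f x.
Proof. by rewrite -[a *: x]addr0 hf f0 addr0. Qed.
Lemma fN x : f (- x) = - f x.
Proof. by rewrite -scaleN1r fZ mulN1r. Qed.
Lemma fB x y : f (x - y) = f x - f y.
Proof. by rewrite fD fN. Qed.

Lemma f_bound : continuous f -> dual_norm f = 1 -> forall x, `|f x| <= `|x|.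
Proof.
move=> cf dn.
have : f x @[x --> (0:X)] --> f 0 := cf 0.
rewrite f0 => /cvgr0_norm_lt/(_ 1 ltr01)/nbhs_norm0P [d /= d0 Hd].
have hub : forall x, `|x| <= 1 -> `|f x| <= 1.
  move=> x hx.
  have S : has_ubound [set `|f x| | x in [set x : X | `|x| <= 1]].
    exists (2 / d) => _ [y /= hy <-].
    have hy2 : `|(d / 2) *: y| < d.
      rewrite normrZ gtr0_norm ?divr_gt0 //.
      have : d / 2 * `|y| <= d / 2 * 1 by rewrite ler_wpM2l // divr_ge0 // ltW.
      rewrite mulr1; lra.
    have := Hd _ hy2; rewrite fZ normrM gtr0_norm ?divr_gt0 // => h.
    rewrite ler_pdivlMr //.
    have : d / 2 * `|f y| < 1 by [].
    rewrite mulrC; lra.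
  rewrite -dn; apply: ub_le_sup => //; by exists x.
move=> x.
have [->|x0] := eqVneq x 0; first by rewrite f0 !normr0.
have nx : 0 < `|x| by rewrite normr_gt0.
have := hub (`|x|^-1 *: x).
rewrite normrZ normfV normr_id mulVf ?gt_eqF // lexx => /(_ isT).
rewrite fZ normrM normfV normr_id ler_pdivrMl // mulr1 //.
Qed.

End Fun.

Section Proj.
Context {R : realType} {X : normedModType R} (ip : X -> X -> R).
Hypothesis hip : is_inner_product ip.

Definition cvx (C : set X) := convex_set (C : set (convex_lmodType X)).

Lemma cvx_comb (C : set X) x y t : cvx C -> C x -> C y -> 0 <= t -> t <= 1 ->
  C (t *: x + (1 - t) *: y).
Proof.
move=> hC hx hy t0 t1.
have := hC x y (Itv01 t0 t1); rewrite !inE => /(_ hx hy); exact.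
Qed.

End Proj.

Set Implicit Arguments. Unset Strict Implicit.

Arguments cvx_comb {R X C x y t}.
Section Proj.
Context {R : realType} {X : normedModType R} {ip : X -> X -> R}.
Hypothesis hip : is_inner_product ip.
Ltac ipexp := rewrite ?(ipBl hip, ipDl hip, ipZl hip, ipNl hip, ipBr hip, ipDr hip, ipZr hip, ipNr hip).

Lemma nearmin_vi (C : set X) x p s : cvx C -> C p -> 0 < s ->
  (forall c, C c -> `|x - p| ^+ 2 <= `|x - c| ^+ 2 + s ^+ 2) ->
  forall c, C c -> ip (x - p) (c - p) <= s * `|c - p| + s ^+ 2.
Proof.
move=> hC hp s0 hmin c hc.
have key : forall t, 0 < t -> t <= 1 ->
    2 * t * ip (x - p) (c - p) <= t ^+ 2 * `|c - p| ^+ 2 + s ^+ 2.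
  move=> t t0 t1; have := hmin _ (cvx_comb hC hc hp (ltW t0) t1).
  rewrite !(nsq hip); ipexp.
  rewrite (ipC hip c x) (ipC hip p x) (ipC hip p c) => h; nra.
set k := ip (x - p) (c - p) in key *; set m := `|c - p| in key *.
have m0 : 0 <= m by rewrite normr_ge0.
have [sm|ms] := lerP s m.
- have mp : 0 < m by lra.
  have st : 0 < s / m by rewrite divr_gt0.
  have st1 : s / m <= 1 by rewrite ler_pdivrMr // mul1r.
  have h := key (s / m) st st1.
  have e1 : (s / m) ^+ 2 * m ^+ 2 = s ^+ 2.
    field; by rewrite gt_eqF.
  rewrite e1 in h.
  have h' : 2 * (s / m) * k * m <= (s ^+ 2 + s ^+ 2) * m by rewrite ler_pM2r.
  have e2 : 2 * (s / m) * k * m = 2 * s * k.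
    field; by rewrite gt_eqF.
  rewrite e2 in h'.
  have h2 : 2 * s * k <= 2 * s ^+ 2 * m by lra.
  have : k <= s * m by nra.
  have : 0 <= s ^+ 2 by rewrite sqr_ge0.
  lra.
- have := key 1 ltr01 (lexx _); rewrite expr1n mul1r mulr1 => h.
  have : m ^+ 2 <= s ^+ 2 by nra.
  have : 0 <= s * m by nra.
  lra.
Qed.

Lemma proj_vi (C : set X) x p : cvx C -> is_proj C x p ->
  forall c, C c -> ip (x - p) (c - p) <= 0.
Proof.
move=> hC [hp hmin] c hc.
set k := ip (x - p) (c - p); set m := `|c - p|.
rewrite leNgt; apply/negP => k0.
have m0 : 0 <= m by rewrite normr_ge0.
set s := Num.min 1 (k / (2 * (m + 1))).
have s0 : 0 < s by rewrite lt_min ltr01 divr_gt0 // mulr_gt0 // ltr_pwDr.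
have s1 : s <= 1 by rewrite ge_min lexx.
have s2 : s <= k / (2 * (m + 1)) by rewrite ge_min lexx orbT.
have H : forall c, C c -> `|x - p| ^+ 2 <= `|x - c| ^+ 2 + s ^+ 2.
  move=> c' hc'; have h2 := hmin _ hc'.
  have h3 : 0 <= `|x - p| by rewrite normr_ge0.
  have : 0 <= s ^+ 2 by rewrite sqr_ge0.
  nra.
have h := nearmin_vi hC hp s0 H hc; rewrite -/k -/m in h.
have m1 : 0 < m + 1 by lra.
have : s * (m + 1) <= k / 2.
  have e1 : s * (m + 1) <= k / (2 * (m + 1)) * (m + 1) by rewrite ler_pM2r.
  have e2 : k / (2 * (m + 1)) * (m + 1) = k / 2.
    field; by rewrite gt_eqF.
  lra.
have : s ^+ 2 <= s by nra.
nra.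
Qed.

Definition nm (C : set X) x p d t :=
  [/\ C p, 0 <= d, (forall c, C c -> d <= `|x - c|) & `|x - p| <= d + t].

Lemma nm_exists (C : set X) x t : C !=set0 -> 0 < t -> exists p, nm C x p (dist x C) t.
Proof.
move=> [c0 hc0] t0.
have lb : has_lbound [set `|x - s| | s in C].
  by exists 0 => _ [s _ <-]; rewrite normr_ge0.
have ne : [set `|x - s| | s in C] !=set0 by exists `|x - c0|, c0.
have dge : forall c, C c -> dist x C <= `|x - c|.
  by move=> c hc; apply: ge_inf => //; exists c.
have d0 : 0 <= dist x C.
  by apply: lb_le_inf => // _ [s _ <-]; rewrite normr_ge0.
have : inf [set `|x - s| | s in C] < dist x C + t by rewrite /dist ltrDl.
move=> /(inf_lt ne) [_ [p hp <-] hlt].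
by exists p; split => //; rewrite ltW.
Qed.

Lemma nm_sq (C : set X) x p d t c : nm C x p d t -> 0 <= t -> C c ->
  `|x - p| ^+ 2 <= `|x - c| ^+ 2 + (2 * t * d + t ^+ 2).
Proof.
move=> [hp d0 hd hx] t0 hc.
have h1 : `|x - p| ^+ 2 <= (d + t) ^+ 2 by rewrite lerXn2r ?nnegrE ?addr_ge0.
have h2 : d ^+ 2 <= `|x - c| ^+ 2 by rewrite lerXn2r ?nnegrE ?hd.
move: h1; rewrite sqrrD; lra.
Qed.

Lemma nm_vi (C : set X) x p d t s : cvx C -> nm C x p d t -> 0 <= t -> 0 < s ->
  2 * t * d + t ^+ 2 <= s ^+ 2 ->
  forall c, C c -> ip (x - p) (c - p) <= s * `|c - p| + s ^+ 2.
Proof.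
move=> hC hnm t0 s0 hs; apply: nearmin_vi => //; first by case: hnm.
move=> c hc; apply: le_trans (nm_sq hnm t0 hc) _; lra.
Qed.

Lemma nm_lin (C : set X) x p d t c : nm C x p d t -> C c -> `|x - p| <= `|x - c| + t.
Proof. by move=> [hp d0 hd hx] hc; apply: le_trans hx _; rewrite lerD2r hd. Qed.

End Proj.

Section Step.
Context {R : realType} {X : normedModType R} {ip : X -> X -> R}.
Hypothesis hip : is_inner_product ip.
Ltac ipexp := rewrite ?(ipBl hip, ipDl hip, ipZl hip, ipNl hip, ipBr hip, ipDr hip, ipZr hip, ipNr hip).

Lemma step_gen (a b e p : X) s :
  0 <= s -> ip (a - b) (p - b) <= 0 -> ip (e - p) (b - p) <= s * `|b - p| + s ^+ 2 ->
  `|b - p| ^+ 2 <= `|a - e| ^+ 2 - `|(a - e) - (b - p)| ^+ 2 + 2 * s * `|b - p| + 2 * s ^+ 2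
  /\ `|b - p| <= `|a - e| + 2 * s.
Proof.
move=> s0 h1 h2.
have cs := CS hip (a - e) (b - p).
have ny : 0 <= `|b - p| by rewrite normr_ge0.
have nx : 0 <= `|a - e| by rewrite normr_ge0.
have key : `|b - p| ^+ 2 <= ip (a - e) (b - p) + s * `|b - p| + s ^+ 2.
  move: h1 h2; rewrite !(nsq hip); ipexp.
  rewrite ?(ipC hip b a) ?(ipC hip e a) ?(ipC hip p a) ?(ipC hip e b) ?(ipC hip p b) ?(ipC hip p e).
  lra.
split.
  move: key; rewrite !(nsq hip); ipexp.
  rewrite ?(ipC hip b a) ?(ipC hip e a) ?(ipC hip p a) ?(ipC hip e b) ?(ipC hip p b) ?(ipC hip p e).
  lra.
rewrite leNgt; apply/negP => hlt.
nra.
Qed.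

Lemma uniq_near (C : set X) z w0 w1 d r : cvx C -> C w0 -> C w1 ->
  (forall c, C c -> d <= `|z - c|) -> 0 <= d -> 0 <= r ->
  `|z - w0| <= d + r -> `|z - w1| <= d + r -> `|w0 - w1| ^+ 2 <= 4 * (2 * d * r + r ^+ 2).
Proof.
move=> hC h0 h1 hd d0 r0 n0 n1.
have hm := hd _ (cvx_comb hC h0 h1 (_ : 0 <= 2^-1) (_ : 2^-1 <= 1)).
have e1 : 0 <= (2:R)^-1 by rewrite invr_ge0.
have e2 : (2:R)^-1 <= 1 by rewrite invf_le1 // ler1n.
have {}hm := hm e1 e2.
have q0 : `|z - w0| ^+ 2 <= (d + r) ^+ 2 by rewrite lerXn2r ?nnegrE ?addr_ge0 ?normr_ge0.
have q1 : `|z - w1| ^+ 2 <= (d + r) ^+ 2 by rewrite lerXn2r ?nnegrE ?addr_ge0 ?normr_ge0.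
have qm : d ^+ 2 <= `|z - (2^-1 *: w0 + (1 - 2^-1) *: w1)| ^+ 2
  by rewrite lerXn2r ?nnegrE ?normr_ge0.
move: q0 q1 qm; rewrite !(nsq hip); ipexp.
rewrite ?(ipC hip w0 z) ?(ipC hip w1 z) ?(ipC hip w1 w0).
have h2 : (1 - (2:R)^-1) = 2^-1 by field.
rewrite h2 sqrrD.
set i := (2:R)^-1.
have hi : i * 2 = 1 by rewrite /i mulVf.
nra.
Qed.

End Step.

Section AW.
Context {R : realType} {X : normedModType R}.

Definition awclose (C D : set X) (N : nat) (th : R) :=
  forall w, C w -> `|w| <= N%:R -> exists2 d, D d & `|w - d| <= th.

Lemma dist_le (D : set X) w d : D d -> dist w D <= `|w - d|.
Proof. move=> hd; apply: ge_inf; last by exists d. by exists 0 => _ [s _ <-]; rewrite normr_ge0. Qed.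

Lemma dist_ge0 (D : set X) w : D !=set0 -> 0 <= dist w D.
Proof.
move=> [d hd]; apply: lb_le_inf; first by exists `|w - d|, d.
by move=> _ [s _ <-]; rewrite normr_ge0.
Qed.

Lemma dist_lt (D : set X) w th : D !=set0 -> dist w D < th -> exists2 d, D d & `|w - d| < th.
Proof.
move=> [d0 hd0] /inf_lt; move=> /(_ (ex_intro _ `|w - d0| (ex_intro2 _ _ d0 hd0 erefl))).
by move=> [_ [d hd <-] h]; exists d.
Qed.

Lemma excess_ge (C D : set X) N w : D !=set0 -> C w -> `|w| <= N%:R -> dist w D <= excess N C D.
Proof.
move=> [d0 hd0] hw hN; apply: ub_le_sup; last by exists w.
exists (N%:R + `|d0|) => _ [c [hc /= hcN] <-].
apply: le_trans (dist_le c hd0) _; apply: le_trans (ler_normB _ _) _.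
by rewrite lerD2r.
Qed.

Lemma AW_close (Cs : nat -> set X) C : AW_cvg Cs C -> (forall n, Cs n !=set0) -> C !=set0 ->
  forall N th, 0 < th -> exists n0, forall n, (n0 <= n)%N -> awclose (Cs n) C N th /\ awclose C (Cs n) N th.
Proof.
move=> hAW hne hC N th th0.
move: (hAW N) => /cvgrPdist_lt /(_ th th0) /near_oo_ex [n0 hn0].
exists n0 => n /hn0; rewrite sub0r normrN => hlt.
have hh : hN N (Cs n) C < th by apply: le_lt_trans (ler_norm _) hlt.
split=> w hw hwN.
- have h1 := excess_ge hC hw hwN.
  have h2 : excess N (Cs n) C <= hN N (Cs n) C by rewrite /hN le_max lexx.
  have [d hd hlt2] := dist_lt hC (le_lt_trans h1 (le_lt_trans h2 hh)).
  by exists d => //; apply: ltW.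
- have h1 := excess_ge (hne n) hw hwN.
  have h2 : excess N C (Cs n) <= hN N (Cs n) C by rewrite /hN le_max lexx orbT.
  have [d hd hlt2] := dist_lt (hne n) (le_lt_trans h1 (le_lt_trans h2 hh)).
  by exists d => //; apply: ltW.
Qed.

End AW.

Section Expo.
Context {R : realType} {X : normedModType R} (f : X -> R).

Lemma sup_le (A : set X) e a : ereal_sup [set (f a)%:E | a in A] = (f e)%:E -> A a -> f a <= f e.
Proof.
move=> hs ha; rewrite -lee_fin -hs; apply: ereal_sup_ubound; by exists a.
Qed.

Lemma expo_eta (A : set X) e (eps : R) : strongly_exposes f A e -> 0 < eps ->
  exists2 eta, 0 < eta & forall a, A a -> eps <= `|a - e| -> f a <= f e - eta.
Proof.
move=> [_ hAe hsup hseq] eps0.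
apply: contrapT => hn.
have hall : forall n : nat, exists a, A a /\ eps <= `|a - e| /\ f e - (n.+1%:R)^-1 < f a.
  move=> n; apply: contrapT => hn2; apply: hn; exists (n.+1%:R)^-1; first by rewrite invr_gt0.
  move=> a ha hea; rewrite leNgt; apply/negP => hlt; apply: hn2; by exists a.
have [u hu] := choice hall.
have hfu : (fun n => f (u n)) @ \oo --> f e.
  apply/cvgrPdist_le => r r0.
  have := nbhs_infty_ger (r^-1) => /near_oo_ex [n0 hn0].
  exists n0 => // n /= hnn.
  have [hA [_ hlt]] := hu n.
  have hle := sup_le hsup hA.
  have hn1 : r^-1 <= n%:R by apply: hn0.
  have hn2 : (n.+1%:R)^-1 <= r.
    rewrite invf_ple ?posrE // ?ltr0n //.
    apply: le_trans hn1 _; by rewrite ler_nat.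
  rewrite ger0_norm; last by rewrite subr_ge0.
  move: hlt; rewrite ltrBlDr -ltrBlDl => hlt'.
  exact: le_trans (ltW hlt') hn2.
have := hseq u (fun n => (hu n).1) hfu.
move=> /cvgrPdist_lt /(_ eps eps0) /near_oo_ex [n0 hn0].
have := hn0 n0 (leqnn _); have [_ [h _]] := hu n0.
rewrite distrC => h2.
by move: (le_lt_trans h h2); rewrite ltxx.
Qed.

End Expo.

Section Tri.
Context {R : realType} {X : normedModType R}.
Lemma tri (x y z : X) : `|x - z| <= `|x - y| + `|y - z|.
Proof. by have := ler_normD (x - y) (y - z); rewrite addrA subrK. Qed.
Lemma ntri (x y : X) : `|x| <= `|x - y| + `|y|.
Proof. by have := ler_normD (x - y) y; rewrite subrK. Qed.
Lemma comb_diff (x y : X) (t : R) : t *: x + (1 - t) *: y - y = t *: (x - y).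
Proof. by rewrite scalerBr scalerBl scale1r addrCA (addrC y) addrK. Qed.
End Tri.

Section Slopes.
Context {R : realType} {X : normedModType R} (f : X -> R).
Hypothesis hf : linear_functional f.
Hypothesis fb : forall x, `|f x| <= `|x|.

Lemma f_lip x y : f x - f y <= `|x - y|.
Proof. rewrite -(fB f hf); apply: le_trans (ler_norm _) (fb _). Qed.

Lemma slopeA (A A' : set X) e q N0 (om eps eta : R) :
  cvx A' -> A' q -> `|q - e| <= om -> awclose A' A N0 om ->
  (forall a, A a -> eps / 2 <= `|a - e| -> f a <= f e - eta) ->
  0 < eps -> 0 <= om -> 3 * om <= eps / 2 -> 3 * om <= eta / 2 ->
  `|e| + eps + om <= N0%:R ->
  forall a', A' a' -> eps <= `|a' - q| -> f a' - f q <= - (eta / (2 * eps)) * `|a' - q|.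
Proof.
move=> hA' hq hqe hcl hexp eps0 om0 h1 h2 hN a' ha' hd.
set L := `|a' - q| in hd *.

have L0 : 0 < L by lra.
set t := eps / L.
have t0 : 0 <= t by rewrite divr_ge0 ?ltW.
have t1 : t <= 1 by rewrite ler_pdivrMr // mul1r.
have tp : 0 < t by rewrite divr_gt0.
set w := t *: a' + (1 - t) *: q.
have hw : A' w by apply: cvx_comb.
have ewq : w - q = t *: (a' - q) by rewrite comb_diff.
have nwq : `|w - q| = eps.
  by rewrite ewq normrZ ger0_norm // /t -/L divfK // gt_eqF.
have fwq : f w - f q = t * (f a' - f q) by rewrite -!(fB f hf) ewq (fZ f hf).
have hqe' : `|e - q| <= om by rewrite distrC.
have t_1 := tri w e q.
have t_2 := tri w q e.
have hwN : `|w| <= N0%:R.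
  have := ntri w e; lra.
have [at_ hA hwa] := hcl w hw hwN.
have t_3 := tri w at_ e.
have hae : eps / 2 <= `|at_ - e| by lra.
have hfa := hexp _ hA hae.
have l1 := f_lip w at_.
have l2 := f_lip e q.
have key : t * (f a' - f q) <= - (eta / 2) by lra.
have e1 : t * (f a' - f q) * (L / eps) = f a' - f q.
  rewrite /t; field; apply/andP; split; by rewrite gt_eqF.
have e2 : - (eta / 2) * (L / eps) = - (eta / (2 * eps)) * L.
  field; by rewrite gt_eqF.
have Le : 0 < L / eps by rewrite divr_gt0.
rewrite -e1 -e2 ler_pM2r //.
Qed.

Lemma slopeB (B B' : set X) z p N0 (om : R) :
  cvx B' -> B' p -> `|p - z| <= om -> awclose B' B N0 om ->
  (forall b, B b -> f z <= f b) -> 0 <= om -> `|z| + om + 1 <= N0%:R ->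
  forall b, B' b -> - (3 * om) * (1 + `|b - p|) <= f b - f p.
Proof.
move=> hB' hp hpz hcl hF om0 hN.
have near1 : forall w, B' w -> `|w - p| <= 1 -> f p - 2 * om <= f w.
  move=> w hw hw1.
  have hwN : `|w| <= N0%:R.
    have := ntri w z; have := tri w p z; lra.
  have [bt hbt hwb] := hcl w hw hwN.
  have := hF _ hbt; have := f_lip bt w; rewrite distrC; have := f_lip p z; lra.
move=> b hb.
set L := `|b - p|.
have L0 : 0 <= L by rewrite normr_ge0.
have [L1|L1] := lerP L 1.
  have := near1 b hb L1; nra.
have Lp : 0 < L by lra.
set t := 1 / L.
have t0 : 0 <= t by rewrite divr_ge0 ?ltW.
have t1 : t <= 1 by rewrite ler_pdivrMr // mul1r ltW.
set w := t *: b + (1 - t) *: p.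
have hw : B' w by apply: cvx_comb.
have ewq : w - p = t *: (b - p) by rewrite comb_diff.
have nwq : `|w - p| = 1.
  by rewrite ewq normrZ ger0_norm // /t -/L divfK // gt_eqF.
have fwq : f w - f p = t * (f b - f p) by rewrite -!(fB f hf) ewq (fZ f hf).
have := near1 w hw (ltac:(by rewrite nwq)) => h.
have key : - (2 * om) <= t * (f b - f p) by lra.
have e1 : t * (f b - f p) * L = f b - f p.
  rewrite /t; field; by rewrite gt_eqF.
have : - (2 * om) * L <= f b - f p by rewrite -e1 ler_pM2r.
nra.
Qed.

End Slopes.

Section Anchor.
Context {R : realType} {X : normedModType R} {ip : X -> X -> R}.
Hypothesis hip : is_inner_product ip.

Lemma anchor (C Cn : set X) z z' w q d N (de t rho dd T : R) :
  cvx C -> C w -> (forall c, C c -> d <= `|z - c|) -> `|z - w| <= d -> 0 <= d ->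
  awclose C Cn N de -> awclose Cn C N de -> `|w| <= N%:R ->
  `|z| + d + 2 * rho + de + t <= N%:R ->
  `|z' - z| <= rho -> nm Cn z' q dd t -> 0 <= de -> 0 <= t -> 0 <= rho -> 0 <= T ->
  4 * (2 * d * (2 * rho + 2 * de + t) + (2 * rho + 2 * de + t) ^+ 2) <= T ^+ 2 ->
  `|q - w| <= de + T.
Proof.
move=> hC hw hd hzw d0 cl1 cl2 hwN hN hz' hnm de0 t0 r0 T0 hT.
have [w' hw' hww'] := cl1 w hw hwN.
have hq := nm_lin hnm hw'.
have a1 := tri z' z w'.
have a2 := tri z w w'.
have a3 := tri z z' q.
have hz'' : `|z - z'| <= rho by rewrite distrC.
have hqN : `|q| <= N%:R.
  have := ntri q z; rewrite (distrC q z); lra.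
have [qt hqt hqq] := cl2 q (let: And4 h _ _ _ := hnm in h) hqN.
have a4 := tri z q qt.
have hu := uniq_near hip hC hqt hw hd d0 (_ : 0 <= 2 * rho + 2 * de + t) (_ : `|z - qt| <= d + (2 * rho + 2 * de + t)) (_ : `|z - w| <= d + (2 * rho + 2 * de + t)).
have := hu (ltac:(lra)) (ltac:(lra)) (ltac:(lra)) => hsq.
have hX : `|qt - w| <= T.
  rewrite leNgt; apply/negP => hlt.
  have : T ^+ 2 < `|qt - w| ^+ 2 by rewrite ltrXn2r ?nnegrE ?normr_ge0.
  lra.
have := tri q qt w; lra.
Qed.

End Anchor.

Section Help.
Context {R : realType}.

Lemma pos_min (a b : R) : 0 < a -> 0 < b -> exists c, [/\ 0 < c, c <= a & c <= b].
Proof.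
move=> a0 b0; exists (Num.min a b); split.
- by rewrite lt_min a0 b0.
- by rewrite ge_min lexx.
- by rewrite ge_min lexx orbT.
Qed.

Lemma small_poly (d T : R) : 0 <= d -> 0 < T ->
  exists2 r0, 0 < r0 & forall r, 0 <= r -> r <= r0 -> 4 * (2 * d * r + r ^+ 2) <= T ^+ 2.
Proof.
move=> d0 T0.
have h : 0 < T ^+ 2 / (4 * (2 * d + 1)) by rewrite divr_gt0 ?exprn_gt0 // mulr_gt0 //; lra.
have [r0 [r00 r01 r02]] := pos_min ltr01 h.
exists r0 => // r r0' rr.
have e1 : 4 * (2 * d * r + r ^+ 2) <= 4 * r * (2 * d + 1) by nra.
have e2 : 4 * r * (2 * d + 1) <= 4 * r0 * (2 * d + 1) by nra.
have e3 : 4 * r0 * (2 * d + 1) <= T ^+ 2.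
  have hp : 0 < 4 * (2 * d + 1) by lra.
  have := r02; rewrite ler_pdivlMr // => h2; lra.
lra.
Qed.

End Help.

Section Help2.
Context {R : realType} {X : normedModType R}.

Lemma awclose_mono (C D : set X) N (a b : R) : a <= b -> awclose C D N a -> awclose C D N b.
Proof. move=> ab h w hw hN; have [d hd hwd] := h w hw hN; exists d => //; exact: le_trans ab. Qed.

Lemma nm_good (C : set X) x (s t0 : R) : C !=set0 -> 0 < s -> 0 < t0 ->
  exists p t, [/\ nm C x p (dist x C) t, 0 < t, t <= t0 & 2 * t * dist x C + t ^+ 2 <= s ^+ 2].
Proof.
move=> hC s0 t00.
have d0 := dist_ge0 x hC.
have h : 0 < s ^+ 2 / (2 * dist x C + 1) by rewrite divr_gt0 ?exprn_gt0 //; lra.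
have [t1 [t10 t11 t12]] := pos_min ltr01 h.
have [t [tp tt0 tt1]] := pos_min t00 t10.
have [p hp] := nm_exists x hC tp.
exists p, t; split => //.
have hp2 : 0 < 2 * dist x C + 1 by lra.
have := t12; rewrite ler_pdivlMr // => h2.
have : t <= 1 by lra.
nra.
Qed.

End Help2.

Section Arith.
Context {R : realType}.
Implicit Types (D Y Z G s om ka k m lam be W : R).

Lemma ar_err D Y Z s (s0 : R) : 0 <= s -> s <= 1 -> 0 <= D -> Y <= D + 2 * s -> Z <= Y + 2 * s ->
  s * (4 * D + 16) <= s0 ^+ 2 -> 2 * s * Y + 2 * s * Z + 4 * s ^+ 2 <= s0 ^+ 2.
Proof. move=> *; nra. Qed.

Lemma ar_main D Y Z G s (s0 : R) W : 0 <= W ->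
  Y ^+ 2 <= D ^+ 2 - W + 2 * s * Y + 2 * s ^+ 2 ->
  Z ^+ 2 <= Y ^+ 2 - G ^+ 2 + 2 * s * Z + 2 * s ^+ 2 ->
  2 * s * Y + 2 * s * Z + 4 * s ^+ 2 <= s0 ^+ 2 ->
  Z ^+ 2 <= D ^+ 2 - G ^+ 2 + s0 ^+ 2.
Proof. move=> *; lra. Qed.

Lemma ar_c1 Z G ka : 0 < ka -> 0 <= Z -> ka * Z / 2 <= G -> ka ^+ 2 / 4 * Z ^+ 2 <= G ^+ 2.
Proof.
move=> k0 Z0 h.
have h0 : 0 <= ka * Z / 2 by rewrite divr_ge0 // mulr_ge0 // ltW.
have : (ka * Z / 2) ^+ 2 <= G ^+ 2 by rewrite lerXn2r ?nnegrE //; apply: le_trans h.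
have -> : (ka * Z / 2) ^+ 2 = ka ^+ 2 / 4 * Z ^+ 2 by field.
done.
Qed.

Lemma ar_c2 D Z G (s0 : R) k m : 0 < m -> m * (1 + k) = 1 -> 0 <= k ->
  Z ^+ 2 <= D ^+ 2 - G ^+ 2 + s0 ^+ 2 -> k * Z ^+ 2 <= G ^+ 2 -> Z ^+ 2 <= m * D ^+ 2 + s0 ^+ 2.
Proof.
move=> m0 mk k0 h1 h2.
have h5 : (1 + k) * Z ^+ 2 <= D ^+ 2 + s0 ^+ 2 by lra.
have : m * ((1 + k) * Z ^+ 2) <= m * (D ^+ 2 + s0 ^+ 2) by rewrite ler_pM2l.
rewrite mulrA mk mul1r => h.
have m1 : m <= 1.
  have : m * k >= 0 by rewrite mulr_ge0 // ltW.
  lra.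
have : 0 <= s0 ^+ 2 by rewrite sqr_ge0.
nra.
Qed.

Lemma ar_c3 D Z (s0 : R) m lam : m <= lam ^+ 2 -> 0 <= lam -> 0 <= D -> 0 < s0 -> 0 <= Z ->
  Z ^+ 2 <= m * D ^+ 2 + s0 ^+ 2 -> Z <= lam * D + s0.
Proof.
move=> ml l0 D0 s0p Z0 h.
rewrite leNgt; apply/negP => hlt.
have hl0 : 0 <= lam * D + s0 by rewrite addr_ge0 ?mulr_ge0 // ltW.
have : (lam * D + s0) ^+ 2 < Z ^+ 2 by rewrite ltrXn2r ?nnegrE.
have : m * D ^+ 2 <= lam ^+ 2 * D ^+ 2 by rewrite ler_wpM2r ?sqr_ge0.
have : 0 <= lam * D * s0 by rewrite !mulr_ge0 // ltW.
rewrite sqrrD; lra.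
Qed.

Lemma ar_d1 D Y Z s om ka : ka * Z < 6 * om * (1 + Y) -> Y <= D + 2 * s -> s <= 1 -> 0 <= om ->
  ka * Z < 6 * om * (3 + D).
Proof. move=> *; nra. Qed.

Lemma ar_d2 D Z om ka lam be : 0 < ka -> 6 * om <= ka / 2 -> 1 / 2 <= lam -> 38 * om <= be * ka ->
  ka <= 1 / 2 -> 0 <= om -> 0 <= D -> ka * Z < 6 * om * (3 + D) -> Z <= lam * D + be - om.
Proof.
move=> k0 h1 h2 h3 h4 om0 D0 h.
have a1 : 6 * om * D <= ka * lam * D.
  apply: ler_wpM2r => //. nra.
have a2 : 18 * om <= ka * (be - om) by nra.
have : ka * Z <= ka * (lam * D + be - om) by nra.
by rewrite ler_pM2l.
Qed.

End Arith.

Lemma finish {R : realType} (D Y Z G W s s0 om eps ka k m lam be qe pe D' yev fy fp fx fq : R) :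
  0 <= D -> 0 <= Y -> 0 <= Z -> 0 <= G -> 0 <= W -> 0 < s -> s <= om -> 0 < om -> om <= 1 / 4 ->
  Y ^+ 2 <= D ^+ 2 - W + 2 * s * Y + 2 * s ^+ 2 -> Y <= D + 2 * s ->
  Z ^+ 2 <= Y ^+ 2 - G ^+ 2 + 2 * s * Z + 2 * s ^+ 2 -> Z <= Y + 2 * s ->
  s * (4 * D + 16) <= s0 ^+ 2 ->
  qe <= om -> D' <= Z + qe -> yev <= Y + pe -> pe <= om ->
  (eps <= Z -> fx - fq <= - ka * Z) ->
  - (3 * om) * (1 + Y) <= fy - fp ->
  fy - fp - (fx - fq) <= G ->
  0 < ka -> ka <= 1 / 2 -> k = ka ^+ 2 / 4 -> 0 < k -> 0 < m -> m * (1 + k) = 1 ->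
  m <= lam ^+ 2 -> 1 / 2 < lam -> lam < 1 -> be = (1 - lam) * eps -> s0 = be / 2 -> 0 < s0 ->
  om <= eps / 6 -> om <= be / 2 -> om <= be * ka / 38 -> om <= ka / 12 ->
  (D' <= 2 * eps \/ D' <= lam * D + (1 - lam) * eps) /\ yev <= D + eps.
Proof.
move=> D0 Y0 Z0 G0 W0 sp s1 om0 omq hY1 hY2 hZ1 hZ2 herr0 hqe hD' hyev hpe hsA hsB hfG
  ka0 ka1 hk k0 m0 mk lam2 lam0 lam1 hbe hs0 s00 omeps ombe omk omk2.
split; last by lra.
have [Zs|Zs] := lerP Z eps.
  left; lra.
right.
have {}hsA := hsA (ltW Zs).
have s1' : s <= 1 by lra.
have herr := ar_err (ltW sp) s1' D0 hY2 hZ2 herr0.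
have hmain := ar_main W0 hY1 hZ1 herr.
have [c1|c2] := lerP (6 * om * (1 + Y)) (ka * Z).
  have hG : ka * Z / 2 <= G by lra.
  have hG2 := ar_c1 ka0 Z0 hG.
  rewrite -hk in hG2.
  have h6 := ar_c2 m0 mk (ltW k0) hmain hG2.
  have l0 : 0 <= lam by lra.
  have h7 := ar_c3 lam2 l0 D0 s00 Z0 h6.
  lra.
have c3 := ar_d1 c2 hY2 s1' (ltW om0).
have e1 : 6 * om <= ka / 2 by lra.
have e2 : 38 * om <= be * ka by lra.
have := ar_d2 ka0 e1 (ltW lam0) e2 ka1 (ltW om0) D0 c3.
lra.
Qed.

Lemma ar_lam {R : realType} (m : R) : m <= ((1 + m) / 2) ^+ 2.
Proof. have : 0 <= (1 - m) ^+ 2 by rewrite sqr_ge0. move=> h. have -> : ((1 + m) / 2) ^+ 2 = m + (1 - m) ^+ 2 / 4 by field. lra. Qed.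

Section Main.
Context {R : realType} {X : normedModType R} {ip : X -> X -> R} (f : X -> R).
Hypothesis hip : is_inner_product ip.
Hypothesis hf : linear_functional f.
Hypothesis fb : forall x, `|f x| <= `|x|.
Variables (A B : set X) (v e : X).
Hypotheses (hAc : cvx A) (hBc : cvx B) (hAe : A e) (hBe : B (e + v)).
Hypothesis F2 : forall b, B b -> f (e + v) <= f b.
Hypothesis F3 : forall a b, A a -> B b -> `|v| <= `|b - a|.

Lemma step_main (eps eta : R) : 0 < eps -> eps <= 1 -> 0 < eta -> eta <= eps ->
  (forall a, A a -> eps / 2 <= `|a - e| -> f a <= f e - eta) ->
  exists lam, [/\ 0 <= lam, lam < 1 & exists2 de, 0 < de & exists N0 : nat,
    forall (A' B' : set X) x y x', cvx A' -> cvx B' -> A' !=set0 -> B' !=set0 ->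
      awclose A' A N0 de -> awclose A A' N0 de -> awclose B' B N0 de -> awclose B B' N0 de ->
      is_proj B' x y -> is_proj A' y x' ->
      (`|x' - e| <= 2 * eps \/ `|x' - e| <= lam * `|x - e| + (1 - lam) * eps)
      /\ `|y - (e + v)| <= `|x - e| + eps].
Proof.
move=> eps0 eps1 eta0 etae hexp.
set ka := eta / (2 * eps).
have ka0 : 0 < ka by rewrite divr_gt0 // mulr_gt0.
have ka1 : ka <= 1 / 2.
  rewrite /ka ler_pdivrMr ?mulr_gt0 //; lra.
set k := ka ^+ 2 / 4.
have k0 : 0 < k by rewrite divr_gt0 ?exprn_gt0.
set m := 1 / (1 + k).
have m0 : 0 < m by rewrite divr_gt0 //; lra.
have m1 : m < 1 by rewrite ltr_pdivrMr; lra.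
have mk : m * (1 + k) = 1 by rewrite /m divfK // gt_eqF //; lra.
set lam := (1 + m) / 2.
have lam0 : 1 / 2 < lam by rewrite /lam; lra.
have lam1 : lam < 1 by rewrite /lam; lra.
have lam2 : m <= lam ^+ 2 by apply: ar_lam.
exists lam; split => //; first lra.
set be := (1 - lam) * eps.
have be0 : 0 < be by rewrite mulr_gt0 //; lra.
set s0 := be / 2.
have s00 : 0 < s0 by rewrite divr_gt0.
have q14 : (0 : R) < 1 / 4 by lra.
have q2 : 0 < eta / 6 by lra.
have q3 : 0 < eps / 6 by lra.
have q4 : 0 < be / 2 by lra.
have q5 : 0 < be * ka / 38 by rewrite divr_gt0 // mulr_gt0.
have q6 : 0 < ka / 12 by lra.
have [uu1 [uu10 uu11 uu12]] := pos_min q14 q2.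
have [uu2 [uu20 uu21 uu22]] := pos_min uu10 q3.
have [uu3 [uu30 uu31 uu32]] := pos_min uu20 q4.
have [uu4 [uu40 uu41 uu42]] := pos_min uu30 q5.
have [om [om0 om1 om2]] := pos_min uu40 q6.
have omq : om <= 1 / 4 by lra.
have ometa : om <= eta / 6 by lra.
have omeps : om <= eps / 6 by lra.
have ombe : om <= be / 2 by lra.
have omk : om <= be * ka / 38 by lra.
have omk2 : om <= ka / 12 by lra.
have nv := normr_ge0 v.
have q8 : 0 < om / 2 by lra.
have [r1 r10 hr1] := small_poly nv q8.
have q9 : 0 < r1 / 4 by lra.
have [wp [wp0 wp1 wp2]] := pos_min om0 q9.
have q10 : 0 < wp / 2 by lra.
have [r2 r20 hr2] := small_poly nv q10.
have q11 : 0 < r2 / 3 by lra.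
have q12 : 0 < r1 / 6 by lra.
have [d1 [d10 d11 d12]] := pos_min q10 q11.
have [de [de0 de1 de2]] := pos_min d10 q12.
have dewp : de <= wp / 2 by lra.
have der2 : de <= r2 / 3 by lra.
have deom : de <= om by lra.
have ne := normr_ge0 e.
set N0 := Num.bound (`|e| + 2 * `|v| + 3).
have hN0 : `|e| + 2 * `|v| + 3 < N0%:R by apply: archi_boundP; lra.
have nev : `|e + v| <= `|e| + `|v| by apply: ler_normD.
exists de => //; exists N0.
move=> A' B' x y x' hA'c hB'c hA'n hB'n cA'A cAA' cB'B cBB' hpy hpx'.
set D := `|x - e|.
have D0 : 0 <= D by rewrite normr_ge0.
have q7 : 0 < s0 ^+ 2 / (4 * D + 16) by rewrite divr_gt0 ?exprn_gt0 //; lra.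
have [s [sp s1 s2]] := pos_min om0 q7.
have [p [t [hnmp tp tde hts]]] := nm_good e hB'n sp de0.
have hpB' : B' p by case: hnmp.
have hdB : forall c, B c -> `|v| <= `|e - c| by move=> c hc; rewrite distrC; exact: F3.
have hzw1 : `|e - (e + v)| <= `|v| by rewrite opprD addrA subrr sub0r normrN.
have hpev : `|p - (e + v)| <= wp.
  have h0 : `|e - e| <= 0 by rewrite subrr normr0.
  have hT : 4 * (2 * `|v| * (2 * 0 + 2 * de + t) + (2 * 0 + 2 * de + t) ^+ 2) <= (wp / 2) ^+ 2.
    apply: hr2; lra.
  have := anchor hip hBc hBe hdB hzw1 nv cBB' cB'B (_ : `|e + v| <= N0%:R)
     (_ : `|e| + `|v| + 2 * 0 + de + t <= N0%:R) h0 hnmp (ltW de0) (ltW tp) (lexx 0) (_ : 0 <= wp / 2) hT.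
  move=> /(_ ltac:(lra) ltac:(lra) ltac:(lra)); lra.
have [q [t' [hnmq tp' tde' hts']]] := nm_good p hA'n sp de0.
have hqA' : A' q by case: hnmq.
have hdA : forall c, A c -> `|v| <= `|e + v - c| by move=> c hc; exact: F3.
have hzw2 : `|e + v - e| <= `|v| by rewrite addrC addKr.
have hqe : `|q - e| <= om.
  have hT : 4 * (2 * `|v| * (2 * wp + 2 * de + t') + (2 * wp + 2 * de + t') ^+ 2) <= (om / 2) ^+ 2.
    apply: hr1; lra.
  have := anchor hip hAc hAe hdA hzw2 nv cAA' cA'A (_ : `|e| <= N0%:R)
     (_ : `|e + v| + `|v| + 2 * wp + de + t' <= N0%:R) hpev hnmq (ltW de0) (ltW tp') (ltW wp0) (_ : 0 <= om / 2) hT.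
  move=> /(_ ltac:(lra) ltac:(lra) ltac:(lra)); lra.
have hyB' : B' y by case: hpy.
have hx'A' : A' x' by case: hpx'.
have h1 := proj_vi hip hB'c hpy hpB'.
have h2 := nm_vi hip hB'c hnmp (ltW tp) sp hts hyB'.
have [hY1 hY2] := step_gen hip (ltW sp) h1 h2.
have h3 := proj_vi hip hA'c hpx' hqA'.
have h4 := nm_vi hip hA'c hnmq (ltW tp') sp hts' hx'A'.
have [hZ1 hZ2] := step_gen hip (ltW sp) h3 h4.
rewrite -/D in hY1 hY2.
set Y := `|y - p| in hY1 hY2 hZ1 hZ2.
set Z := `|x' - q| in hZ1 hZ2.
set G := `|y - p - (x' - q)| in hZ1.
have Y0 : 0 <= Y by rewrite normr_ge0.
have Z0 : 0 <= Z by rewrite normr_ge0.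
have G0 : 0 <= G by rewrite normr_ge0.
have hW : 0 <= `|x - e - (y - p)| ^+ 2 by rewrite sqr_ge0.
have hyev := tri y p (e + v); rewrite -/Y in hyev.
have hD' : `|x' - e| <= Z + `|q - e| by have := tri x' q e.
have hpe : `|p - (e + v)| <= om by apply: le_trans hpev wp1.
have hsA : eps <= Z -> f x' - f q <= - ka * Z.
  move=> hz.
  apply: (slopeA hf fb hA'c hqA' hqe (awclose_mono deom cA'A) hexp eps0 (ltW om0)) => //; lra.
have hsB : - (3 * om) * (1 + Y) <= f y - f p.
  apply: (slopeB hf fb hB'c hpB' hpe (awclose_mono deom cB'B) F2 (ltW om0)) => //; lra.
have hfG : f (y - p - (x' - q)) <= G.
  apply: le_trans (ler_norm _) (fb _).
rewrite !(fB f hf) in hfG.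
have herr0 : s * (4 * D + 16) <= s0 ^+ 2.
  by move: s2; rewrite ler_pdivlMr //; lra.
have W0 : 0 <= `|x - e - (y - p)| ^+ 2 by rewrite sqr_ge0.
exact: (finish D0 Y0 Z0 G0 W0 sp s1 om0 omq hY1 hY2 hZ1 hZ2 herr0 hqe hD' hyev hpe hsA hsB hfG
  ka0 ka1 erefl k0 m0 mk lam2 lam0 lam1 erefl erefl s00 omeps ombe omk omk2).
Qed.
End Main.

Lemma seq_contract {R : realType} (Dn : nat -> R) n1 (eps lam : R) :
  0 < eps -> 0 <= lam -> lam < 1 -> (forall n, 0 <= Dn n) ->
  (forall n, (n1 <= n)%N -> Dn n.+1 <= 2 * eps \/ Dn n.+1 <= lam * Dn n + (1 - lam) * eps) ->
  exists n2, forall n, (n2 <= n)%N -> Dn n <= 2 * eps.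
Proof.
move=> eps0 lam0 lam1 Dpos hst.
set ga := (1 - lam) * eps.
have ga0 : 0 < ga by rewrite mulr_gt0 // subr_gt0.
have inv : forall n, (n1 <= n)%N -> Dn n <= 2 * eps -> Dn n.+1 <= 2 * eps.
  move=> n hn hd; case: (hst n hn) => // h.
  have : lam * Dn n <= lam * (2 * eps) by rewrite ler_wpM2l.
  rewrite /ga in h; nra.
have P : forall k, Dn (n1 + k)%N <= 2 * eps \/ Dn (n1 + k)%N <= Dn n1 - k%:R * ga.
  elim=> [|k IH]; first by right; rewrite addn0 mul0r subr0.
  have hk : (n1 <= n1 + k)%N by rewrite leq_addr.
  rewrite addnS.
  have [d2|d2] := lerP (Dn (n1 + k)%N) (2 * eps).
    by left; apply: inv.
  case: IH => IH; first by move: d2; rewrite ltNge IH.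
  case: (hst _ hk) => h; first by left.
  right.
  have : (1 - lam) * eps <= (1 - lam) * (Dn (n1 + k)%N - eps) by rewrite ler_wpM2l ?subr_ge0 ?ltW //; lra.
  have e : (k.+1)%:R = k%:R + 1 :> R by rewrite -addn1 natrD.
  rewrite e mulrDl mul1r.
  move=> h'; rewrite /ga in h' IH *; nra.
set K := Num.bound (Dn n1 / ga).
have hK : Dn n1 / ga < K%:R by apply: archi_boundP; rewrite divr_ge0 // ltW.
have hK2 : Dn n1 - K%:R * ga <= 2 * eps.
  have : Dn n1 < K%:R * ga by rewrite -ltr_pdivrMr.
  lra.
have base : Dn (n1 + K)%N <= 2 * eps by case: (P K) => h //; apply: le_trans h hK2.
exists (n1 + K)%N => n hn.
rewrite -(subnKC hn).
elim: (n - (n1 + K))%N => [|j IH]; first by rewrite addn0.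
rewrite addnS; apply: inv => //.
by rewrite -addnA leq_addr.
Qed.

Unset Implicit Arguments. Set Strict Implicit.

Theorem corollary4p16 (R : realType) (X : completeNormedModType R)
    (A B : set X) (v e : X) (f : X -> R) :
  norm_from_inner_product (X := X) ->
  closed_convex_nonempty A -> closed_convex_nonempty B ->
  displacement A B v ->
  A e -> B (e + v) ->
  linear_functional f -> continuous f -> dual_norm f = 1 ->
  ereal_inf [set (f (b - v))%:E | b in B] = (f e)%:E ->
  ereal_sup [set (f a)%:E | a in A] = (f e)%:E ->
  strongly_exposes f A e ->
  stable A B.
Proof.
move=> [ip hip] [Acl Acv An] [Bcl Bcv Bn] hdisp hAe hBe hf hcont hdn hinf hsup hexp.
have hAc : cvx A := Acv.
have hBc : cvx B := Bcv.
have fb := f_bound f hf hcont hdn.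
have F3 : forall a b, A a -> B b -> `|v| <= `|b - a|.
  move=> a b ha hb; have := hdisp.2 (b - a).
  rewrite !sub0r !normrN; apply; apply: subset_closure.
  by exists b => //; exists a.
have F2 : forall b, B b -> f (e + v) <= f b.
  move=> b hb.
  have : (ereal_inf [set (f (b - v))%:E | b in B] <= (f (b - v))%:E)%E.
    by apply: ereal_inf_lbound; exists b.
  rewrite hinf lee_fin (fB f hf) (fD f hf); lra.
have distB : dist e B = `|v|.
  apply/le_anti/andP; split.
    by have := dist_le e hBe; rewrite opprD addrA subrr sub0r normrN.
  apply: lb_le_inf; first by exists `|e - (e + v)|, (e + v).
  by move=> _ [s hs <-]; rewrite distrC; exact: F3.
have distsAB : dist_sets A B = `|v|.
  apply/le_anti/andP; split.
    rewrite -distB; apply: ge_inf; last by exists e.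
    by exists 0 => _ [s hs <-]; apply: dist_ge0; exists (e + v).
  apply: lb_le_inf; first by exists (dist e B), e.
  move=> _ [s hs <-]; apply: lb_le_inf; first by exists `|s - (e + v)|, (e + v).
  by move=> _ [t ht <-]; rewrite distrC; exact: F3.
have distA : dist (e + v) A = `|v|.
  apply/le_anti/andP; split.
    by have := dist_le (e + v) hAe; rewrite addrAC subrr add0r.
  apply: lb_le_inf; first by exists `|e + v - e|, e.
  by move=> _ [s hs <-]; exact: F3.
split; first by exists e; split => //; rewrite distB distsAB.
split; first by exists (e + v); split => //; rewrite distA distsAB.
move=> As Bs hAs hBs hAW hBW a0 a b [ha0 hAP].
have hAsn : forall n, As n !=set0 by move=> n; case: (hAs n).
have hBsn : forall n, Bs n !=set0 by move=> n; case: (hBs n).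
have hAsc : forall n, cvx (As n) by move=> n; case: (hAs n).
have hBsc : forall n, cvx (Bs n) by move=> n; case: (hBs n).
have core : forall eps, 0 < eps -> eps <= 1 -> exists n2, forall n, (n2 <= n)%N ->
    `|a n - e| <= 2 * eps /\ `|b n.+1 - (e + v)| <= 3 * eps.
  move=> eps eps0 eps1.
  have eps2 : 0 < eps / 2 by rewrite divr_gt0.
  have [eta0 eta00 heta] := expo_eta hexp eps2.
  have [eta [etap etale1 etale2]] := pos_min eta00 eps0.
  have heta' : forall a, A a -> eps / 2 <= `|a - e| -> f a <= f e - eta.
    by move=> x hx hxe; have := heta x hx hxe; lra.
  have [lam [lam0 lam1 [de de0 [N0 hstep]]]] :=
    step_main hip hf fb hAc hBc hAe hBe F2 F3 eps0 eps1 etap etale2 heta'.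
  have [nA hnA] := AW_close hAW hAsn An N0 de0.
  have [nB hnB] := AW_close hBW hBsn Bn N0 de0.
  set n1 := maxn nA nB.
  have hs : forall n, (n1 <= n)%N ->
      (`|a n.+1 - e| <= 2 * eps \/ `|a n.+1 - e| <= lam * `|a n - e| + (1 - lam) * eps)
      /\ `|b n.+1 - (e + v)| <= `|a n - e| + eps.
    move=> n hn.
    have hnA' : (nA <= n.+1)%N by apply: leq_trans (leq_maxl nA nB) (leq_trans hn (leqnSn n)).
    have hnB' : (nB <= n.+1)%N by apply: leq_trans (leq_maxr nA nB) (leq_trans hn (leqnSn n)).
    have [c1 c2] := hnA _ hnA'.
    have [c3 c4] := hnB _ hnB'.
    exact: (hstep _ _ _ _ _ (hAsc n.+1) (hBsc n.+1) (hAsn n.+1) (hBsn n.+1) c1 c2 c3 c4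
      (hAP n).1 (hAP n).2).
  have [n2 hn2] := seq_contract (Dn := fun n => `|a n - e|) eps0 lam0 lam1
    (fun n => normr_ge0 _) (fun n hn => (hs n hn).1).
  exists (maxn n1 n2) => n hn.
  have h1 : (n2 <= n)%N by apply: leq_trans (leq_maxr n1 n2) hn.
  have h2 : (n1 <= n)%N by apply: leq_trans (leq_maxl n1 n2) hn.
  have := hn2 n h1; have := (hs n h2).2 => /= hb2 ha2.
  split => //; lra.
have ha : a @ \oo --> e.
  apply/cvgrPdist_le => r r0.
  have r3 : 0 < r / 3 by rewrite divr_gt0.
  have [c [c0 c1 c2]] := pos_min ltr01 r3.
  have [n2 hn2] := core c c0 c1.
  exists n2 => // n /= hn.
  rewrite distrC; have := (hn2 n hn).1; lra.
have hb : b @ \oo --> e + v.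
  apply/cvgrPdist_le => r r0.
  have r3 : 0 < r / 3 by rewrite divr_gt0.
  have [c [c0 c1 c2]] := pos_min ltr01 r3.
  have [n2 hn2] := core c c0 c1.
  exists n2.+1 => // n /=.
  case: n => [//|n] hn.
  rewrite distrC; have := (hn2 n hn).2; lra.
split; [exact: cvgP ha | exact: cvgP hb].
Qed.
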